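(* Consider the system of ordinary differential equations in $\mathbb{R}^3$ $$\dot x = \vartheta,\qquad \dot\vartheta = -\lambda\vartheta - xu + x - x^3,\qquad \dot u = -\alpha u - \beta x\vartheta,$$ with real parameters $\alpha>0$, $\lambda = 0$ and $\beta>0$. Then every separatrix of the saddle $x=\vartheta=u=0$, i.e. every solution $(x(t),\vartheta(t),u(t))$, not identically zero, with $$\lim_{t\to-\infty}x(t)=\lim_{t\to-\infty}\vartheta(t)=\lim_{t\to-\infty}u(t)=0,$$ tends to infinity as $t\to+\infty$ (it has no $\omega$-limit points).
   Context: For $\alpha>0$, $\lambda=0$ the origin is a saddle equilibrium with a one-dimensional unstable manifold (eigenvalues $1,-1,-\alpha$); a separatrix is a nontrivial solution lying on this unstable manifold. *)

(* Defs.v *)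
From Stdlib Require Import Reals.
From Coquelicot Require Import Coquelicot.
Open Scope R_scope.

Definition is_solution (alpha lam beta : R) (x th u : R -> R) : Prop :=
  forall t : R,
    is_derive x t (th t) /\
    is_derive th t (- lam * th t - x t * u t + x t - x t ^ 3) /\
    is_derive u t (- alpha * u t - beta * x t * th t).

Definition state_norm (x th u : R -> R) (t : R) : R :=
  sqrt (x t ^ 2 + th t ^ 2 + u t ^ 2).

Definition is_separatrix (alpha lam beta : R) (x th u : R -> R) : Prop :=
  is_solution alpha lam beta x th u /\
  (exists t : R, x t <> 0 \/ th t <> 0 \/ u t <> 0) /\
  is_lim x m_infty 0 /\ is_lim th m_infty 0 /\ is_lim u m_infty 0.

(* Main.v *)
Require Import Defs.
From Stdlib Require Import Reals Lra Psatz Classical.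
From Coquelicot Require Import Coquelicot.
Open Scope R_scope.
Lemma D_eq (f : R -> R) (t a b : R) : is_derive f t a -> a = b -> is_derive f t b.
Proof. intros; subst; auto. Qed.
Lemma D_const t (c : R) : is_derive (fun _ => c) t 0.
Proof. apply (is_derive_const c). Qed.
Lemma D_plus (f g : R -> R) (t a b : R) : is_derive f t a -> is_derive g t b -> is_derive (fun s => f s + g s) t (a+b).
Proof. intros; now apply (is_derive_plus f g). Qed.
Lemma D_minus (f g : R -> R) (t a b : R) : is_derive f t a -> is_derive g t b -> is_derive (fun s => f s - g s) t (a-b).
Proof. intros; now apply (is_derive_minus f g). Qed.
Lemma D_mult (f g : R -> R) (t a b : R) : is_derive f t a -> is_derive g t b -> is_derive (fun s => f s * g s) t (a * g t + f t * b).
Proof. intros; apply (is_derive_mult f g); auto. intros; apply Rmult_comm. Qed.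
Lemma D_pow (f : R -> R) (t a : R) n : is_derive f t a -> is_derive (fun s => f s ^ n) t (INR n * a * f t ^ Init.Nat.pred n).
Proof. intros; now apply is_derive_pow. Qed.
Lemma D_div (f : R -> R) (t a k : R) : is_derive f t a -> is_derive (fun s => f s / k) t (a / k).
Proof. intros H. unfold Rdiv. eapply D_eq. apply D_mult. exact H. apply D_const. simpl; ring. Qed.

Ltac dd := repeat match goal with
 | |- is_derive (fun s => _ - _) _ _ => apply D_minus
 | |- is_derive (fun s => _ + _) _ _ => apply D_plus
 | |- is_derive (fun s => _ / _) _ _ => apply D_div
 | |- is_derive (fun s => _ ^ _) _ _ => apply D_pow
 | |- is_derive (fun s => _ * _) _ _ => apply D_mult
 | H : forall t, is_derive ?f t _ |- is_derive ?f _ _ => apply H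
 | |- is_derive (fun s => ?f s) _ _ => match goal with H : forall t, is_derive f t _ |- _ => apply H end
 | |- is_derive _ _ _ => apply D_const
 end.

Lemma mvt_lb (f df : R -> R) a b m : a <= b -> (forall r, is_derive f r (df r)) ->
  (forall r, a <= r <= b -> m <= df r) -> m * (b - a) <= f b - f a.
Proof.
  intros Hab Hd Hm.
  destruct (MVT_gen f a b df) as [c [Hc Heq]].
  - intros; apply Hd.
  - intros r _. apply continuity_pt_filterlim. apply (ex_derive_continuous f).
    eexists; apply Hd.
  - rewrite Rmin_left in Hc by lra. rewrite Rmax_right in Hc by lra.
    rewrite Heq. apply Rmult_le_compat_r; [lra|]. apply Hm; lra.
Qed.

Lemma mvt_ub (f df : R -> R) a b m : a <= b -> (forall r, is_derive f r (df r)) ->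
  (forall r, a <= r <= b -> df r <= m) -> f b - f a <= m * (b - a).
Proof.
  intros Hab Hd Hm.
  assert (H := mvt_lb (fun s => - f s) (fun s => - df s) a b (-m) Hab).
  cbv beta in H.
  assert (H2: - m * (b - a) <= - f b - - f a).
  { apply H. intros r. apply (is_derive_opp f). apply Hd.
    intros r Hr. specialize (Hm r Hr). lra. }
  lra.
Qed.

Lemma stay (f df : R -> R) s l L eta : (forall r, is_derive f r (df r)) ->
  (forall r, s <= r <= s + l -> Rabs (df r) <= L) -> 0 <= l -> L * l <= eta / 2 ->
  eta <= Rabs (f s) ->
  (forall r, s <= r <= s + l -> eta / 2 <= f r) \/ (forall r, s <= r <= s + l -> f r <= - (eta / 2)).
Proof.
  intros Hd Hb Hl HL He.
  destruct (Rle_or_lt 0 (f s)) as [Hp|Hn].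
  - left. intros r Hr. rewrite Rabs_pos_eq in He by lra.
    assert (H := mvt_lb f df s r (-L) (proj1 Hr) Hd).
    assert (-L * (r - s) <= f r - f s).
    { apply H. intros q Hq. specialize (Hb q ltac:(lra)). apply Rabs_le_between in Hb. lra. }
    assert (0 <= L) by (specialize (Hb s ltac:(lra)); pose proof (Rabs_pos (df s)); lra).
    assert (L * (r - s) <= L * l) by (apply Rmult_le_compat_l; lra). lra.
  - right. intros r Hr. rewrite Rabs_left in He by lra.
    assert (H := mvt_ub f df s r L (proj1 Hr) Hd).
    assert (f r - f s <= L * (r - s)).
    { apply H. intros q Hq. specialize (Hb q ltac:(lra)). apply Rabs_le_between in Hb. lra. }
    assert (0 <= L) by (specialize (Hb s ltac:(lra)); pose proof (Rabs_pos (df s)); lra).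
    assert (L * (r - s) <= L * l) by (apply Rmult_le_compat_l; lra). lra.
Qed.
Lemma ab_le a b : Rabs (a*b) * 2 <= a^2 + b^2.
Proof. rewrite Rabs_mult. pose proof (pow2_ge_0 (Rabs a - Rabs b)).
 assert (Rabs a ^2 = a^2) by (rewrite RPow_abs; apply Rabs_pos_eq; apply pow2_ge_0).
 assert (Rabs b ^2 = b^2) by (rewrite RPow_abs; apply Rabs_pos_eq; apply pow2_ge_0). nra. Qed.

Lemma N_ineq alpha beta a b c : 0 <= alpha -> 0 < beta ->
  2*a*b + 2*b*(-a*c + a - a^3) + 2*c*(-alpha*c - beta*a*b) <= (4+beta)*(1+a^2+b^2+c^2)^2.
Proof.
  intros Ha Hb. 
  pose proof (pow2_ge_0 a); pose proof (pow2_ge_0 b); pose proof (pow2_ge_0 c).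
  set (N := 1+a^2+b^2+c^2).
  assert (HN1 : 1 <= N) by (unfold N; lra).
  assert (hab : Rabs (a*b) * 2 <= N) by (pose proof (ab_le a b); unfold N; lra).
  assert (hc : Rabs c <= N).
  { pose proof (ab_le c 1). rewrite Rmult_1_r in H2. unfold N. simpl in *. lra. }
  assert (hq : 0 <= N*N) by nra.
  assert (habc : Rabs (a*b*c) * 2 <= N*N).
  { rewrite Rabs_mult. pose proof (Rabs_pos (a*b)); pose proof (Rabs_pos c).
    apply Rle_trans with (N * Rabs c). nra. nra. }
  assert (ha2 : a^2 <= N) by (unfold N; lra).
  assert (haab : Rabs (a*b) * 2 * a^2 <= N*N) by (pose proof (Rabs_pos (a*b)); nra).
  pose proof (Rle_abs (a*b*c)). pose proof (Rle_abs (- (a*b*c))). rewrite Rabs_Ropp in H3.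
  pose proof (Rle_abs (a*b)). pose proof (Rle_abs (- (a*b))). rewrite Rabs_Ropp in H5.
  assert (e1 : 2*a*b <= N) by lra.
  assert (e2 : - (2*b*a^3) <= N*N) by nra.
  assert (e3 : - (2*a*b*c) <= N*N) by lra.
  assert (e4 : - (2*a*b*c*beta) <= beta * (N*N)) by nra.
  assert (e5 : N <= N*N) by nra.
  assert (e6 : 0 <= alpha * c^2) by nra.
  replace ((4 + beta) * N ^ 2) with (4 * (N*N) + beta * (N*N)) by ring.
  replace (2*a*b + 2*b*(-a*c + a - a^3) + 2*c*(-alpha*c - beta*a*b)) with
    (2*a*b + 2*a*b - 2*a*b*c - 2*b*a^3 - 2*alpha*c^2 - 2*a*b*c*beta) by ring.
  lra.
Qed.

Lemma absB a B : 1 <= B -> a^2 <= B -> Rabs a <= B.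
Proof. intros. apply Rabs_le. nra. Qed.

Lemma a_mul x y X Y : Rabs x <= X -> Rabs y <= Y -> Rabs (x*y) <= X*Y.
Proof. intros. rewrite Rabs_mult. apply Rmult_le_compat; auto using Rabs_pos. Qed.
Lemma a_plus x y X Y : Rabs x <= X -> Rabs y <= Y -> Rabs (x+y) <= X+Y.
Proof. intros. eapply Rle_trans. apply Rabs_triang. lra. Qed.
Lemma a_minus x y X Y : Rabs x <= X -> Rabs y <= Y -> Rabs (x-y) <= X+Y.
Proof. intros. eapply Rle_trans. apply Rabs_triang. rewrite Rabs_Ropp. lra. Qed.
Lemma a_opp x X : Rabs x <= X -> Rabs (-x) <= X.
Proof. intros. rewrite Rabs_Ropp. auto. Qed.
Lemma a_cst k : 0 <= k -> Rabs k <= k.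
Proof. intros. rewrite Rabs_pos_eq; lra. Qed.
Ltac bnd := repeat first [eassumption | apply a_minus | apply a_plus | apply a_mul | apply a_opp | (apply a_cst; lra)].

Lemma div_le_helper a b c : 0 < b -> a <= c*b -> a/b <= c.
Proof. intros. apply Rmult_le_reg_r with b; auto. unfold Rdiv. rewrite Rmult_assoc, Rinv_l by lra. lra. Qed.
Lemma inv_le_rev a b : 0 < a -> 0 < b -> /a <= /b -> b <= a.
Proof. intros. apply Rinv_le_contravar in H1. rewrite !Rinv_inv in H1. auto. apply Rinv_0_lt_compat; auto. Qed.
Lemma mul_le_half L l e : 0 < L -> l <= e/(2*L) -> L*l <= e/2.
Proof. intros. apply Rle_trans with (L*(e/(2*L))). apply Rmult_le_compat_l; lra. right. field. lra. Qed.
Lemma mul_le_of L l e : 0 < L -> l <= e/L -> L*l <= e.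
Proof. intros. apply Rle_trans with (L*(e/L)). apply Rmult_le_compat_l; lra. right. field. lra. Qed.
Lemma div_lt_helper a b c : 0 < b -> a < c*b -> a/b < c.
Proof. intros. apply Rmult_lt_reg_r with b; auto. unfold Rdiv. rewrite Rmult_assoc, Rinv_l by lra. lra. Qed.

Definition W (beta : R) (x th u : R -> R) (t : R) : R :=
  th t ^2/2 - x t^2/2 + x t^4/4 - u t^2/(2*beta).

Theorem lemma1 (alpha lam beta : R) (x th u : R -> R) :
  0 < alpha -> lam = 0 -> 0 < beta ->
  is_separatrix alpha lam beta x th u ->
  is_lim (state_norm x th u) p_infty p_infty.
Proof.
  intros Ha Hl Hb [Hsol [Hnt [Lx [Lth Lu]]]]. subst lam.
  assert (Hx : forall t, is_derive x t (th t)) by (intro t; apply (Hsol t)).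
  assert (Hth : forall t, is_derive th t (- 0 * th t - x t * u t + x t - x t ^ 3)) by (intro t; apply (Hsol t)).
  assert (Hu : forall t, is_derive u t (- alpha * u t - beta * x t * th t)) by (intro t; apply (Hsol t)).
  clear Hsol.
  assert (Hab : 0 < alpha / beta) by (apply Rdiv_lt_0_compat; lra).
  assert (HWd : forall t, is_derive (W beta x th u) t (alpha / beta * u t ^ 2)).
  { intro t. unfold W. eapply D_eq. dd. simpl. field. lra. }
  assert (Wmono : forall a b, a <= b -> W beta x th u a <= W beta x th u b).
  { intros a b Hle. assert (0 * (b - a) <= W beta x th u b - W beta x th u a).
    { apply (mvt_lb _ _ a b 0 Hle HWd). intros r _. apply Rmult_le_pos; [lra | apply pow2_ge_0]. }
    lra. }
  apply is_lim_spec in Lx. apply is_lim_spec in Lth. apply is_lim_spec in Lu.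
  set (Wf := W beta x th u) in *.
  assert (Wnn : forall t, 0 <= Wf t).
  { intro t. destruct (Rle_or_lt 0 (Wf t)) as [|Hneg]; auto. exfalso.
    set (e := - Wf t).
    set (d := Rmin 1 (Rmin (e/2) (e*beta/2))).
    assert (Hd : 0 < d) by (unfold d; repeat apply Rmin_pos; unfold e; try nra; lra).
    destruct (Lx (mkposreal d Hd)) as [M1 HM1].
    destruct (Lu (mkposreal d Hd)) as [M2 HM2].
    set (s := Rmin t (Rmin M1 M2) - 1).
    assert (s < M1) by (unfold s; pose proof (Rmin_r t (Rmin M1 M2)); pose proof (Rmin_l M1 M2); lra).
    assert (s < M2) by (unfold s; pose proof (Rmin_r t (Rmin M1 M2)); pose proof (Rmin_r M1 M2); lra).
    assert (s <= t) by (unfold s; pose proof (Rmin_l t (Rmin M1 M2)); lra).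
    specialize (HM1 s H). specialize (HM2 s H0). simpl in HM1, HM2.
    rewrite Rminus_0_r in HM1, HM2.
    assert (d <= 1) by apply Rmin_l.
    assert (d <= e/2) by (eapply Rle_trans; [apply Rmin_r | apply Rmin_l]).
    assert (d <= e*beta/2) by (eapply Rle_trans; [apply Rmin_r | apply Rmin_r]).
    assert (hx2 : x s ^ 2 < d).
    { assert (Rabs (x s) * Rabs (x s) < d * d) by (apply Rmult_le_0_lt_compat; auto using Rabs_pos).
      rewrite <- Rabs_mult in H5. pose proof (Rle_abs (x s * x s)). simpl. nra. }
    assert (hu2 : u s ^ 2 < d).
    { assert (Rabs (u s) * Rabs (u s) < d * d) by (apply Rmult_le_0_lt_compat; auto using Rabs_pos).
      rewrite <- Rabs_mult in H5. pose proof (Rle_abs (u s * u s)). simpl. nra. }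
    assert (hu3 : u s ^ 2 / (2*beta) < e / 4).
    { apply div_lt_helper. lra. nra. }
    assert (Wf s <= Wf t) by (apply Wmono; auto).
    assert (Wf s > - e) .
    { unfold Wf, W. pose proof (pow2_ge_0 (th s)). assert (0 <= x s ^4) by (replace (x s ^ 4) with ((x s^2)^2) by ring; apply pow2_ge_0). lra. }
    unfold e in *. lra. }
  assert (Hpos : exists t1, 0 < Wf t1).
  { apply NNPP; intro Hn.
    assert (HW0 : forall t, Wf t = 0).
    { intro t. apply Rle_antisym; auto. apply Rnot_lt_le. intro. apply Hn. exists t; auto. }
    assert (Hu0 : forall t, u t = 0).
    { intro t. pose proof (is_derive_unique _ _ _ (HWd t)) as H.
      rewrite (Derive_ext _ (fun _ => 0)) in H by apply HW0. rewrite Derive_const in H.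
      assert (u t ^ 2 = 0).
      { apply Rmult_eq_reg_l with (alpha/beta). lra. lra. }
      simpl in H0; rewrite Rmult_1_r in H0; apply Rmult_integral in H0; destruct H0; auto. }
    assert (Hxth : forall t, x t * th t = 0).
    { intro t. pose proof (is_derive_unique _ _ _ (Hu t)) as H.
      rewrite (Derive_ext _ (fun _ => 0)) in H by apply Hu0. rewrite Derive_const in H.
      rewrite Hu0 in H. assert (beta * (x t * th t) = 0) by lra.
      apply Rmult_integral in H0. destruct H0; auto. lra. }
    assert (HX2 : forall t, is_derive (fun s => x s ^ 2) t (2 * (x t * th t))).
    { intro t. eapply D_eq. dd. simpl. ring. }
    assert (Hc : forall a b, a <= b -> x a ^ 2 = x b ^ 2).
    { intros a b Hle.
      assert (0 * (b - a) <= x b ^2 - x a ^2).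
      { apply (mvt_lb _ _ a b 0 Hle HX2). intros r _. rewrite Hxth. lra. }
      assert (x b ^2 - x a ^2 <= 0 * (b - a)).
      { apply (mvt_ub _ _ a b 0 Hle HX2). intros r _. rewrite Hxth. lra. }
      lra. }
    assert (Hx0 : forall t, x t = 0).
    { intro t. apply NNPP; intro Hne.
      assert (Hp : 0 < Rabs (x t) / 2) by (apply Rabs_pos_lt in Hne; lra).
      destruct (Lx (mkposreal _ Hp)) as [M1 HM1].
      set (s := Rmin t M1 - 1).
      assert (s < M1) by (unfold s; pose proof (Rmin_r t M1); lra).
      assert (s <= t) by (unfold s; pose proof (Rmin_l t M1); lra).
      specialize (HM1 s H). simpl in HM1. rewrite Rminus_0_r in HM1.
      specialize (Hc s t H0).
      assert (Rabs (x s) ^ 2 = Rabs (x t) ^ 2) by (rewrite !RPow_abs, Hc; auto).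
      pose proof (Rabs_pos (x s)). pose proof (Rabs_pos (x t)). nra. }
    assert (Hth0 : forall t, th t = 0).
    { intro t. pose proof (is_derive_unique _ _ _ (Hx t)) as H.
      rewrite (Derive_ext _ (fun _ => 0)) in H by apply Hx0. rewrite Derive_const in H. auto. }
    destruct Hnt as [t [H|[H|H]]]; [apply H, Hx0 | apply H, Hth0 | apply H, Hu0]. }
  destruct Hpos as [t1 Hc].
  set (c := Wf t1) in *.
  assert (Wc : forall t, t1 <= t -> c <= Wf t) by (intros; apply Wmono; auto).
  apply is_lim_spec. intro M. simpl. apply NNPP; intro Hn.
  set (A := 1 + M * M).
  assert (HA : 1 <= A) by (unfold A; nra).
  assert (Hseq : forall T, exists y, T < y /\ 1 + x y ^ 2 + th y ^ 2 + u y ^ 2 <= A).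
  { intro T. apply NNPP; intro H2. apply Hn. exists T. intros y Hy.
    apply Rnot_le_lt. intro H3. apply H2. exists y. split; auto.
    unfold state_norm in H3.
    set (S := x y ^ 2 + th y ^ 2 + u y ^ 2) in *.
    assert (0 <= S) by (unfold S; pose proof (pow2_ge_0 (x y)); pose proof (pow2_ge_0 (th y)); pose proof (pow2_ge_0 (u y)); lra).
    pose proof (sqrt_sqrt S H). pose proof (sqrt_pos S).
    assert (sqrt S * sqrt S <= M * M) by (apply Rmult_le_compat; lra).
    unfold A. unfold S in *. lra. }
  assert (WK : forall s, Wf s <= A + A * A).
  { intro s. destruct (Hseq s) as [y [Hy HyA]].
    apply Rle_trans with (Wf y). apply Wmono; lra.
    unfold Wf, W.
    pose proof (pow2_ge_0 (x y)); pose proof (pow2_ge_0 (th y)); pose proof (pow2_ge_0 (u y)).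
    assert (u y ^ 2 / (2 * beta) >= 0).
    { unfold Rdiv. apply Rle_ge, Rmult_le_pos; auto. left. apply Rinv_0_lt_compat. lra. }
    assert (x y ^ 4 <= A * A) by (replace (x y ^ 4) with (x y ^ 2 * x y ^ 2) by ring; apply Rmult_le_compat; lra).
    assert (0 <= A * A) by (apply Rmult_le_pos; lra).
    lra. }
  destruct (completeness (fun z => exists s, z = Wf s)) as [S [HS1 HS2]].
  { exists (A + A * A). intros z [s ->]. apply WK. }
  { exists (Wf 0), 0. auto. }
  assert (Cauchy : forall dl, 0 < dl -> exists T, forall a b, T <= a -> a <= b -> Wf b - Wf a < dl).
  { intros dl Hdl. apply NNPP; intro Hn2.
    assert (S <= S - dl); [|lra].
    apply HS2. intros z [s ->]. apply Rnot_lt_le. intro Hz. apply Hn2. exists s. intros a b Ha1 Hb1.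
    assert (Wf b <= S) by (apply HS1; exists b; auto).
    assert (Wf s <= Wf a) by (apply Wmono; auto). lra. }
  pose (C := 4 + beta).
  assert (HC : 0 < C) by (unfold C; lra).
  pose (h := / (2 * C * A)).
  assert (Hh : 0 < h) by (unfold h; apply Rinv_0_lt_compat; nra).
  pose (B := 2 * A).
  assert (HB : 1 <= B) by (unfold B; lra).
  pose (Nf := fun s => 1 + x s ^ 2 + th s ^ 2 + u s ^ 2).
  pose (Nd := fun s => 2*(x s*th s) + 2*(th s*(-0*th s - x s*u s + x s - x s^3)) + 2*(u s*(-alpha*u s - beta*x s*th s))).
  assert (HNd : forall s, is_derive Nf s (Nd s)).
  { intro s. unfold Nf, Nd. eapply D_eq. dd. simpl. ring. }
  assert (HN1 : forall s, 1 <= Nf s).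
  { intro s. unfold Nf. pose proof (pow2_ge_0 (x s)); pose proof (pow2_ge_0 (th s)); pose proof (pow2_ge_0 (u s)). lra. }
  assert (HFd : forall s, is_derive (fun r => / Nf r) s (- Nd s / Nf s ^ 2)).
  { intro s. apply is_derive_inv. apply HNd. specialize (HN1 s). lra. }
  assert (HFb : forall s, - C <= - Nd s / Nf s ^ 2).
  { intro s. replace (- Nd s / Nf s ^ 2) with (- (Nd s / Nf s ^2)) by (unfold Rdiv; ring).
    apply Ropp_le_contravar. apply div_le_helper. specialize (HN1 s). nra.
    pose proof (N_ineq alpha beta (x s) (th s) (u s) ltac:(lra) Hb).
    unfold Nd, Nf, C. eapply Rle_trans; [|apply H]. right. ring. }
  pose (L1 := alpha*B + beta*B*B).
  pose (L2 := B*B + B*B*B + B*B + B*B*B*B).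
  pose (L3 := 2*(B*B*B) + 4*(B*B) + 6*(B*B*B*B)).
  assert (HBB : 1 <= B*B) by nra.
  assert (HBBB : 1 <= B*B*B) by nra.
  assert (HBBBB : 1 <= B*B*B*B) by nra.
  assert (HL1 : 0 < L1) by (unfold L1; nra).
  assert (HL2 : 0 < L2) by (unfold L2; lra).
  assert (HL3 : 0 < L3) by (unfold L3; lra).
  pose (e0 := Rmin c (1/9)).
  assert (He0 : 0 < e0) by (apply Rmin_pos; lra).
  assert (He0c : e0 <= c) by apply Rmin_l.
  assert (He09 : e0 <= 1/9) by apply Rmin_r.
  pose (l3 := Rmin (h/4) (e0/(2*L3))).
  assert (Hl3 : 0 < l3) by (apply Rmin_pos; [lra | apply Rdiv_lt_0_compat; lra]).
  assert (Hl3h : l3 <= h/4) by apply Rmin_l.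
  assert (Hl3L : l3 <= e0/(2*L3)) by apply Rmin_r.
  pose (ep := Rmin (1/2) (e0*l3/16)).
  assert (Hep : 0 < ep) by (apply Rmin_pos; nra).
  assert (Hep2 : ep <= 1/2) by apply Rmin_l.
  assert (Hepl : ep <= e0*l3/16) by apply Rmin_r.
  pose (l2 := Rmin (h/4) (ep/(2*L2))).
  assert (Hl2 : 0 < l2) by (apply Rmin_pos; [lra | apply Rdiv_lt_0_compat; lra]).
  assert (Hl2h : l2 <= h/4) by apply Rmin_l.
  assert (Hl2L : l2 <= ep/(2*L2)) by apply Rmin_r.
  pose (e1 := Rmin (e0/(4*(B*B))) (Rmin (beta*ep/(4*alpha)) (beta*ep*l2/8))).
  assert (He1 : 0 < e1).
  { apply Rmin_pos. apply Rdiv_lt_0_compat; lra. apply Rmin_pos. apply Rdiv_lt_0_compat; nra.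
    apply Rdiv_lt_0_compat; [apply Rmult_lt_0_compat; [apply Rmult_lt_0_compat|]|]; lra. }
  assert (He1a : e1 <= e0/(4*(B*B))) by apply Rmin_l.
  assert (He1b : e1 <= beta*ep/(4*alpha)) by (eapply Rle_trans; [apply Rmin_r | apply Rmin_l]).
  assert (He1c : e1 <= beta*ep*l2/8) by (eapply Rle_trans; [apply Rmin_r | apply Rmin_r]).
  pose (l1 := Rmin (h/2) (e1/(2*L1))).
  assert (Hl1 : 0 < l1) by (apply Rmin_pos; [lra | apply Rdiv_lt_0_compat; lra]).
  assert (Hl1h : l1 <= h/2) by apply Rmin_l.
  assert (Hl1L : l1 <= e1/(2*L1)) by apply Rmin_r.
  pose (d0 := alpha/beta * ((e1/2)^2) * l1).
  assert (Hd0 : 0 < d0) by (unfold d0; apply Rmult_lt_0_compat; [apply Rmult_lt_0_compat; [lra|] | lra]; apply pow_lt; lra).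
  destruct (Cauchy d0 Hd0) as [T HT].
  destruct (Hseq (Rmax T t1)) as [t [Ht HtA]].
  assert (HtT : T <= t) by (pose proof (Rmax_l T t1); lra).
  assert (Htt1 : t1 <= t) by (pose proof (Rmax_r T t1); lra).
  clearbody e0 l3 ep l2 e1 l1.
  assert (Hwin : forall s, t <= s <= t + h -> Nf s <= B).
  { intros s Hs.
    assert (H1 : - C * (s - t) <= / Nf s - / Nf t).
    { apply (mvt_lb _ _ t s (-C) (proj1 Hs) HFd). intros; apply HFb. }
    assert (H2 : / A <= / Nf t).
    { apply Rinv_le_contravar. specialize (HN1 t); lra. exact HtA. }
    assert (H3 : C * (s - t) <= / (2 * A)).
    { apply Rle_trans with (C * h). apply Rmult_le_compat_l; lra.
      right. unfold h. field. split; lra. }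
    assert (H4 : / A - / (2 * A) = / (2 * A)) by (field; lra).
    specialize (HN1 s). unfold B. apply inv_le_rev; lra. }
  assert (Hcomp : forall s, t <= s <= t + h -> Rabs (x s) <= B /\ Rabs (th s) <= B /\ Rabs (u s) <= B).
  { intros s Hs. specialize (Hwin s Hs). unfold Nf in Hwin.
    pose proof (pow2_ge_0 (x s)); pose proof (pow2_ge_0 (th s)); pose proof (pow2_ge_0 (u s)).
    split; [|split]; apply absB; lra. }
  pose (pd := fun s => th s * th s - x s * x s * u s + x s * x s - x s * x s * x s * x s).
  pose (qf := fun s => th s ^ 2 + x s ^ 2 - x s ^ 4).
  pose (qd := fun s => - (2*(th s * x s * u s)) + 4*(x s * th s) - 6*(x s * x s * x s * th s)).
  assert (Hpd : forall s, is_derive (fun r => x r * th r) s (pd s)).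
  { intro s. unfold pd. eapply D_eq. dd. simpl. ring. }
  assert (Hqd : forall s, is_derive qf s (qd s)).
  { intro s. unfold qf, qd. eapply D_eq. dd. simpl. ring. }
  assert (HuB : forall s, t <= s <= t + h -> Rabs (- alpha * u s - beta * x s * th s) <= L1).
  { intros s Hs. destruct (Hcomp s Hs) as [H1 [H2 H3]].
    eapply Rle_trans; [bnd|]. unfold L1. lra. }
  assert (HpB : forall s, t <= s <= t + h -> Rabs (pd s) <= L2).
  { intros s Hs. destruct (Hcomp s Hs) as [H1 [H2 H3]]. unfold pd.
    eapply Rle_trans; [bnd|]. unfold L2. lra. }
  assert (HqB : forall s, t <= s <= t + h -> Rabs (qd s) <= L3).
  { intros s Hs. destruct (Hcomp s Hs) as [H1 [H2 H3]]. unfold qd.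
    eapply Rle_trans; [bnd|]. unfold L3. lra. }
  assert (ClU : forall s, t <= s <= t + h/2 -> Rabs (u s) < e1).
  { intros s Hs. apply Rnot_le_lt. intro Hge.
    assert (Hst : forall r, s <= r <= s + l1 -> (e1/2)^2 <= u r ^ 2).
    { destruct (stay u (fun r => - alpha * u r - beta * x r * th r) s l1 L1 e1 Hu) as [H|H].
      - intros r Hr. apply HuB. lra.
      - lra.
      - apply mul_le_half; auto.
      - exact Hge.
      - intros r Hr. specialize (H r Hr). nra.
      - intros r Hr. specialize (H r Hr). nra. }
    assert (H1 : alpha / beta * (e1/2)^2 * (s + l1 - s) <= Wf (s + l1) - Wf s).
    { apply (mvt_lb _ _ s (s + l1) _ ltac:(lra) HWd). intros r Hr.
      apply Rmult_le_compat_l; [lra|]. apply Hst; auto. }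
    assert (H2 : Wf (t + h) - Wf t < d0) by (apply HT; lra).
    assert (Wf (s + l1) <= Wf (t + h)) by (apply Wmono; lra).
    assert (Wf t <= Wf s) by (apply Wmono; lra).
    replace (s + l1 - s) with l1 in H1 by ring. unfold d0 in H2. lra. }
  assert (Hae1 : alpha * e1 <= beta * ep / 4).
  { apply mul_le_of; [lra|]. eapply Rle_trans; [exact He1b| right; field; lra]. }
  assert (ClP : forall s, t <= s <= t + h/4 -> Rabs (x s * th s) < ep).
  { intros s Hs. apply Rnot_le_lt. intro Hge.
    assert (Hu1 : Rabs (u s) < e1) by (apply ClU; lra).
    assert (Hu2 : Rabs (u (s + l2)) < e1) by (apply ClU; lra).
    apply Rabs_def2 in Hu1. apply Rabs_def2 in Hu2.
    destruct (stay (fun r => x r * th r) pd s l2 L2 ep Hpd) as [H|H].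
    - intros r Hr. apply HpB. lra.
    - lra.
    - apply mul_le_half; auto.
    - exact Hge.
    - assert (H1 : u (s + l2) - u s <= (- (beta * ep / 4)) * (s + l2 - s)).
      { apply (mvt_ub _ _ s (s + l2) _ ltac:(lra) Hu). intros r Hr.
        specialize (H r Hr). cbv beta in H.
        assert (Hr1 : Rabs (u r) < e1) by (apply ClU; lra). apply Rabs_def2 in Hr1.
        assert (beta * (ep / 2) <= beta * (x r * th r)) by (apply Rmult_le_compat_l; lra).
        assert (- (alpha * u r) <= alpha * e1) by nra.
        replace (- alpha * u r - beta * x r * th r) with (- (alpha * u r) - beta * (x r * th r)) by ring.
        lra. }
      replace (s + l2 - s) with l2 in H1 by ring. lra.
    - assert (H1 : (beta * ep / 4) * (s + l2 - s) <= u (s + l2) - u s).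
      { apply (mvt_lb _ _ s (s + l2) _ ltac:(lra) Hu). intros r Hr.
        specialize (H r Hr). cbv beta in H.
        assert (Hr1 : Rabs (u r) < e1) by (apply ClU; lra). apply Rabs_def2 in Hr1.
        assert (beta * (x r * th r) <= beta * (- (ep / 2))) by (apply Rmult_le_compat_l; lra).
        assert (alpha * u r <= alpha * e1) by nra.
        replace (- alpha * u r - beta * x r * th r) with (- (alpha * u r) - beta * (x r * th r)) by ring.
        lra. }
      replace (s + l2 - s) with l2 in H1 by ring. lra. }
  assert (HBe1 : B * B * e1 <= e0 / 4).
  { apply mul_le_of; [lra|]. eapply Rle_trans; [exact He1a| right; field; lra]. }
  assert (ClQ : Rabs (qf t) < e0).
  { apply Rnot_le_lt. intro Hge.
    assert (Hp1 : Rabs (x t * th t) < ep) by (apply ClP; lra).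
    assert (Hp2 : Rabs (x (t + l3) * th (t + l3)) < ep) by (apply ClP; lra).
    apply Rabs_def2 in Hp1. apply Rabs_def2 in Hp2.
    assert (Hxu : forall r, t <= r <= t + l3 -> Rabs (x r * x r * u r) <= e0 / 4).
    { intros r Hr. destruct (Hcomp r ltac:(lra)) as [H1 [H2 H3]].
      assert (Hr1 : Rabs (u r) <= e1) by (left; apply ClU; lra).
      eapply Rle_trans; [bnd | exact HBe1]. }
    destruct (stay qf qd t l3 L3 e0 Hqd) as [H|H].
    - intros r Hr. apply HqB. lra.
    - lra.
    - apply mul_le_half; auto.
    - exact Hge.
    - assert (H1 : (e0 / 4) * (t + l3 - t) <= x (t + l3) * th (t + l3) - x t * th t).
      { apply (mvt_lb _ _ t (t + l3) _ ltac:(lra) Hpd). intros r Hr.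
        specialize (H r Hr). specialize (Hxu r Hr). apply Rabs_le_between in Hxu.
        replace (pd r) with (qf r - x r * x r * u r) by (unfold pd, qf; ring). lra. }
      replace (t + l3 - t) with l3 in H1 by ring. lra.
    - assert (H1 : x (t + l3) * th (t + l3) - x t * th t <= (- (e0 / 4)) * (t + l3 - t)).
      { apply (mvt_ub _ _ t (t + l3) _ ltac:(lra) Hpd). intros r Hr.
        specialize (H r Hr). specialize (Hxu r Hr). apply Rabs_le_between in Hxu.
        replace (pd r) with (qf r - x r * x r * u r) by (unfold pd, qf; ring). lra. }
      replace (t + l3 - t) with l3 in H1 by ring. lra. }
  assert (Hp : Rabs (x t * th t) < ep) by (apply ClP; lra).
  assert (HWt : c <= Wf t) by (apply Wc; auto).
  apply Rabs_def2 in Hp. apply Rabs_def2 in ClQ.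
  unfold qf in ClQ. unfold Wf, W in HWt.
  assert (Hu2b : 0 <= u t ^ 2 / (2 * beta)).
  { unfold Rdiv. apply Rmult_le_pos. apply pow2_ge_0. left. apply Rinv_0_lt_compat. lra. }
  set (a := x t ^ 2) in *. set (b := th t ^ 2) in *.
  assert (Ha0 : 0 <= a) by apply pow2_ge_0.
  assert (Hb0 : 0 <= b) by apply pow2_ge_0.
  assert (Hx4 : x t ^ 4 = a * a) by (unfold a; ring).
  assert (Hpab : (x t * th t) ^ 2 = a * b) by (unfold a, b; ring).
  rewrite Hx4 in HWt, ClQ.
  assert (Hqa : 3 * (a * a) / 4 - a > c / 2) by lra.
  assert (Ha43 : a > 4 / 3) by nra.
  assert (Hbb : b > 1 / 3) by nra.
  assert (Hab2 : a * b > 4 / 9) by nra.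
  assert (Hp2 : (x t * th t) ^ 2 < 1 / 4) by nra.
  lra.
Qed.
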